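(* If $G$ and $H$ are edge transitive graphs, then \[\chi_{vec}(G\times H)=\min\{\chi_{vec}(G),\chi_{vec}(H)\}.\]
   Context: Graphs are finite, simple and undirected. The categorical product $G\times H$ has vertex set $V(G)\times V(H)$, with $(u_1,v_1)\sim(u_2,v_2)$ iff $u_1\sim u_2$ and $v_1\sim v_2$. For a real $k>1$, a vector $k$-coloring of $G$ is a map $\varphi$ from $V(G)$ to the unit sphere of some $\mathbb{R}^d$ with $\varphi(u)^T\varphi(v)\le -\frac{1}{k-1}$ whenever $u\sim v$; the vector chromatic number $\chi_{vec}(G)$ is the smallest such $k$ (equal to $1$ for graphs with no edges). *)

(* Defs.v *)
From HB Require Import structures.
From mathcomp Require Import all_boot all_order all_algebra.
From mathcomp Require Import boolp classical_sets reals.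
Set Implicit Arguments. Unset Strict Implicit. Unset Printing Implicit Defensive.
Import Order.TTheory GRing.Theory Num.Theory.
Local Open Scope ring_scope.
Local Open Scope classical_set_scope.

Definition simple_graph (T : finType) (e : rel T) : Prop :=
  symmetric e /\ irreflexive e.

Definition cat_prod (T U : finType) (e : rel T) (f : rel U) : rel (T * U)%type :=
  fun p q => e p.1 q.1 && f p.2 q.2.

Definition is_automorphism (T : finType) (e : rel T) (s : T -> T) : Prop :=
  bijective s /\ forall u v, e (s u) (s v) = e u v.

Definition edge_transitive (T : finType) (e : rel T) : Prop :=
  forall u v x y, e u v -> e x y ->
    exists s, is_automorphism e s /\
      ((s u = x /\ s v = y) \/ (s u = y /\ s v = x)).

Definition dotv (R : realType) (d : nat) (x y : 'I_d -> R) : R :=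
  \sum_(i < d) x i * y i.

Definition vector_coloring (R : realType) (T : finType) (e : rel T) (k : R)
  (d : nat) (phi : T -> 'I_d -> R) : Prop :=
  (forall u, dotv (phi u) (phi u) = 1) /\
  (forall u v, e u v -> dotv (phi u) (phi v) <= - (k - 1)^-1).

Definition has_edge (T : finType) (e : rel T) : Prop := exists u v, e u v.

Definition chi_vec (R : realType) (T : finType) (e : rel T) : R :=
  if asbool (has_edge e) then
    inf [set k : R | 1 < k /\ exists d (phi : T -> 'I_d -> R), vector_coloring e k phi]
  else 1.

(* Main.v *)
Require Import Defs.
From HB Require Import structures.
From mathcomp Require Import all_boot all_order all_algebra.
From mathcomp Require Import boolp classical_sets reals.
From mathcomp Require Import ring lra.
Set Implicit Arguments. Unset Strict Implicit. Unset Printing Implicit Defensive.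
Import Order.TTheory GRing.Theory Num.Theory.
Local Open Scope ring_scope.

Section Forms.
Variable R : realType.

Definition bf {X : finType} (M : X -> X -> R) (y z : X -> R) : R :=
  \sum_a \sum_b M a b * y a * z b.
Definition qf {X : finType} (M : X -> X -> R) y := bf M y y.
Definition dl {X : finType} (a : X) : X -> R := fun b => (a == b)%:R.
Definition psd {X : finType} (M : X -> X -> R) := forall y, 0 <= qf M y.
Definition symm {X : finType} (M : X -> X -> R) := forall a b, M a b = M b a.

Lemma sum_dl {X : finType} (a : X) (F : X -> R) : \sum_b (a == b)%:R * F b = F a.
Proof.
rewrite (bigD1 a) //= eqxx mul1r big1 ?addr0 // => b /negbTE.
by rewrite eq_sym => ->; rewrite mul0r.
Qed.

Lemma bfDl {X : finType} (M : X -> X -> R) y1 y2 s z :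
  bf M (fun a => y1 a + s * y2 a) z = bf M y1 z + s * bf M y2 z.
Proof.
rewrite /bf big_distrr -big_split /=; apply: eq_bigr => a _.
rewrite big_distrr -big_split /=; apply: eq_bigr => b _; ring.
Qed.

Lemma bfDr {X : finType} (M : X -> X -> R) y z1 z2 s :
  bf M y (fun a => z1 a + s * z2 a) = bf M y z1 + s * bf M y z2.
Proof.
rewrite /bf big_distrr -big_split /=; apply: eq_bigr => a _.
rewrite big_distrr -big_split /=; apply: eq_bigr => b _; ring.
Qed.

Lemma bf_sym {X : finType} (M : X -> X -> R) y z : symm M -> bf M y z = bf M z y.
Proof.
move=> sM; rewrite /bf exchange_big /=; apply: eq_bigr => a _.
by apply: eq_bigr => b _; rewrite sM; ring.
Qed.

Lemma bf_dll {X : finType} (M : X -> X -> R) a z :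
  bf M (dl a) z = \sum_b M a b * z b.
Proof.
rewrite /bf /dl.
rewrite (eq_bigr (fun c => (a == c)%:R * \sum_b M c b * z b)); last first.
  by move=> c _; rewrite big_distrr; apply: eq_bigr => b _ /=; ring.
by rewrite sum_dl.
Qed.

Lemma bf_dlr {X : finType} (M : X -> X -> R) y b :
  bf M y (dl b) = \sum_a M a b * y a.
Proof.
rewrite /bf /dl; apply: eq_bigr => a _.
rewrite (eq_bigr (fun c => (b == c)%:R * (M a c * y a))); last first.
  by move=> c _; rewrite eq_sym; ring.
by rewrite sum_dl.
Qed.

Lemma bf_dl2 {X : finType} (M : X -> X -> R) a b : bf M (dl a) (dl b) = M a b.
Proof.
rewrite bf_dll (eq_bigr (fun c => (b == c)%:R * M a c)) ?sum_dl //.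
by move=> c _; rewrite /dl eq_sym mulrC.
Qed.


Lemma qfD {X : finType} (M : X -> X -> R) y z s : symm M ->
  qf M (fun c => y c + s * z c) = qf M y + 2 * s * bf M y z + s ^+ 2 * qf M z.
Proof. by move=> sM; rewrite /qf bfDl !bfDr (bf_sym _ _ sM); ring. Qed.

Lemma psd_diag {X : finType} (M : X -> X -> R) a : psd M -> 0 <= M a a.
Proof. by move=> pM; have := pM (dl a); rewrite /qf bf_dl2. Qed.

Lemma psd_dl0 {X : finType} (M : X -> X -> R) a b : symm M -> psd M ->
  M a a = 0 -> M a b = 0.
Proof.
move=> sM pM Maa; apply/eqP; apply/negP => /negP m0.
pose s := - (M b b + 1) / (2 * M a b).
have := pM (fun c => dl b c + s * dl a c).
rewrite qfD // /qf !bf_dl2 Maa (sM b a) mulr0 addr0.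
rewrite /s; set m := M a b.
have -> : M b b + 2 * (- (M b b + 1) / (2 * m)) * m = -1.
  by field; rewrite m0 /=.
by rewrite lerNr oppr0 ler10.
Qed.

Lemma bf_rank1 {X : finType} (M : X -> X -> R) (r : X -> R) c y z :
  bf (fun a b => M a b - c * r a * r b) y z =
  bf M y z - c * (\sum_a r a * y a) * (\sum_b r b * z b).
Proof.
rewrite /bf -mulrA big_distrl big_distrr -sumrB; apply: eq_bigr => a _ /=.
rewrite big_distrr big_distrr -sumrB; apply: eq_bigr => b _ /=; ring.
Qed.

Lemma psd_decomp {X : finType} n (S : {set X}) (M : X -> X -> R) :
  (#|S| <= n)%N -> symm M -> psd M -> (forall a b, a \notin S -> M a b = 0) ->
  exists s : seq (R * (X -> R)), all (fun p => 0 <= p.1) s /\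
    forall a b, M a b = \sum_(p <- s) p.1 * p.2 a * p.2 b.
Proof.
elim: n S M => [|n IH] S M Sn sM pM supp.
  exists [::]; split => // a b; rewrite big_nil supp //.
  by move: Sn; rewrite leqn0 cards_eq0 => /eqP ->; rewrite inE.
have [S0|/finset.set0Pn [a0 a0S]] := eqVneq S finset.set0.
  exists [::]; split => // a b; rewrite big_nil supp // S0 inE //.
have SD : (#|S :\ a0| <= n)%N by move: Sn; rewrite (cardsD1 a0) a0S.
have [Ma0|Ma0] := eqVneq (M a0 a0) 0.
  apply: (IH (S :\ a0)) => // a b; rewrite !inE negb_and negbK.
  case/orP => [/eqP -> |]; [exact: psd_dl0|exact: supp].
have p0 : 0 < M a0 a0 by rewrite lt_def Ma0 psd_diag.
pose p := M a0 a0.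
pose M' := fun a b => M a b - p^-1 * M a0 a * M a0 b.
have [s [s0 sE]] : exists s : seq (R * (X -> R)), all (fun p => 0 <= p.1) s /\
    forall a b, M' a b = \sum_(p <- s) p.1 * p.2 a * p.2 b.
  apply: (IH (S :\ a0)) => //.
  - by move=> a b; rewrite /M' sM; ring.
  - move=> y; rewrite /qf bf_rank1.
    set b := \sum_a _.
    have := pM (fun c => y c + (- b / p) * dl a0 c).
    rewrite qfD // /qf bf_dl2 (bf_sym _ _ sM) bf_dll.
    rewrite (eq_bigr (fun c => M a0 c * y c)) -/b; last by [].
    move=> h; apply: le_trans h _; rewrite le_eqVlt; apply/orP; left; apply/eqP.
    rewrite /p; field; exact: Ma0.
  - move=> a b; rewrite !inE negb_and negbK /M'.
    case/orP => [/eqP -> |aS]; first by rewrite /p; field.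
    by rewrite (supp a b aS) (sM a0 a) (supp a a0 aS) !mulr0 mul0r subr0.
exists ((p^-1, M a0) :: s); split.
  by rewrite /= s0 andbT invr_ge0 ltW.
move=> a b; rewrite big_cons /= -sE /M' /=; ring.
Qed.

Lemma trace_psd {X : finType} (Q K : X -> X -> R) : symm Q -> psd Q ->
  (forall w, 0 <= \sum_v \sum_v' w v * w v' * K v v') ->
  0 <= \sum_v \sum_v' Q v v' * K v v'.
Proof.
move=> sQ pQ pK.
have hT : forall a b, a \notin [set: X] -> Q a b = 0 by move=> a b; rewrite inE.
have [s [s0 sE]] := @psd_decomp X #|[set: X]| [set: X] Q (leqnn _) sQ pQ hT.
have -> : \sum_v \sum_v' Q v v' * K v v' =
  \sum_(p <- s) p.1 * \sum_v \sum_v' p.2 v * p.2 v' * K v v'.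
  symmetry; under eq_bigr => q _ do rewrite big_distrr /=.
  rewrite exchange_big /=; apply: eq_bigr => v _.
  under eq_bigr => q _ do rewrite big_distrr /=.
  rewrite exchange_big /=; apply: eq_bigr => v' _.
  rewrite sE big_distrl /=; apply: eq_bigr => q _; ring.
elim: s s0 {sE} => [|q s IHs] /=; first by rewrite big_nil.
case/andP => q0 s0; rewrite big_cons addr_ge0 ?IHs //.
by rewrite mulr_ge0.
Qed.

End Forms.
Arguments dl {R X} a _.


Section K.
Variable R : realType.
Lemma sum_pair {T U : finType} (F : T * U -> R) :
  \sum_a F a = \sum_u \sum_v F (u, v).
Proof. by rewrite pair_bigA; apply: eq_bigr => -[u v]. Qed.

Lemma sum4_swap {A B C D : finType} (F : A -> B -> C -> D -> R) :
  \sum_a \sum_b \sum_c \sum_d F a b c d = \sum_c \sum_d \sum_a \sum_b F a b c d.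
Proof.
under eq_bigr => a _ do rewrite exchange_big /=.
rewrite exchange_big /=; apply: eq_bigr => c _.
under eq_bigr => a _ do rewrite exchange_big /=.
by rewrite exchange_big.
Qed.

Lemma kron_psd {T U : finType} (P : T->T->R) (Q : U->U->R) :
  symm P -> psd P -> symm Q -> psd Q ->
  psd (fun a b : T * U => P a.1 b.1 * Q a.2 b.2).
Proof.
move=> sP pP sQ pQ z; rewrite /qf /bf.
pose K v v' := \sum_u \sum_u' P u u' * z (u, v) * z (u', v').
have -> : \sum_(a : T * U) \sum_(b : T * U) P a.1 b.1 * Q a.2 b.2 * z a * z b
    = \sum_v \sum_v' Q v v' * K v v'.
  rewrite sum_pair.
  under eq_bigr => u _ do under eq_bigr => v _ do rewrite sum_pair /=.
  rewrite exchange_big /=; apply: eq_bigr => v _.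
  under eq_bigr => u _ do rewrite exchange_big /=.
  rewrite exchange_big /=; apply: eq_bigr => v' _.
  rewrite /K big_distrr /=; apply: eq_bigr => u _.
  rewrite big_distrr /=; apply: eq_bigr => u' _; ring.
apply: trace_psd => // w.
have := pP (fun u => \sum_v w v * z (u, v)).
rewrite /qf /bf => h; apply: le_trans h _; rewrite le_eqVlt; apply/orP; left.
apply/eqP; rewrite /K.
transitivity (\sum_a \sum_b \sum_v \sum_v' P a b * (w v * z (a, v)) * (w v' * z (b, v'))).
  apply: eq_bigr => a _; apply: eq_bigr => b _.
  rewrite (big_distrr (P a b)) big_distrl /=; apply: eq_bigr => v _.
  by rewrite big_distrr /=.
rewrite sum4_swap; apply: eq_bigr => v _; apply: eq_bigr => v' _.
rewrite big_distrr /=; apply: eq_bigr => a _.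
rewrite big_distrr /=; apply: eq_bigr => b _; ring.
Qed.

Lemma qf_ext {X : finType} (M N : X -> X -> R) z :
  (forall a b, M a b = N a b) -> qf M z = qf N z.
Proof.
by move=> h; rewrite /qf /bf; apply: eq_bigr => a _; apply: eq_bigr => b _; rewrite h.
Qed.

Lemma qfDM {X : finType} (M N : X -> X -> R) z :
  qf (fun a b => M a b + N a b) z = qf M z + qf N z.
Proof.
rewrite /qf /bf -big_split; apply: eq_bigr => a _.
rewrite -big_split; apply: eq_bigr => b _ /=; ring.
Qed.

Lemma qfZM {X : finType} (M : X -> X -> R) c z :
  qf (fun a b => c * M a b) z = c * qf M z.
Proof.
rewrite /qf /bf big_distrr; apply: eq_bigr => a _.
rewrite big_distrr; apply: eq_bigr => b _ /=; ring.
Qed.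

Lemma dl_pair {T U : finType} (a b : T * U) :
  dl a b = dl a.1 b.1 * dl a.2 b.2 :> R.
Proof.
case: a b => [a1 a2] [b1 b2]; rewrite /dl xpair_eqE /=.
by case: (a1 == b1); case: (a2 == b2); rewrite /= ?mul1r ?mul0r.
Qed.

Lemma prod_form_lb {T U : finType} (A : T -> T -> R) (B : U -> U -> R)
  D l D' l' : symm A -> symm B -> 0 < D -> l < 0 -> 0 < D' -> l' < 0 ->
  (forall y, l * qf dl y <= qf A y) -> (forall y, qf A y <= D * qf dl y) ->
  (forall y, l' * qf dl y <= qf B y) -> (forall y, qf B y <= D' * qf dl y) ->
  forall z, Num.min (D * l') (l * D') * qf dl z <=
            qf (fun a b : T * U => A a.1 b.1 * B a.2 b.2) z.
Proof.
move=> sA sB D0 l0 D'0 l'0 Al Au Bl Bu z.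
set mu := Num.min (D * l') (l * D').
pose P a b := A a b - l * dl a b.
pose Qm a b := D * dl a b - A a b.
pose P' a b := B a b - l' * dl a b.
pose Q' a b := D' * dl a b - B a b.
have sdl : forall (X : finType), symm (@dl R X) by move=> X a b; rewrite /dl eq_sym.
have sP : symm P by move=> a b; rewrite /P sA sdl.
have sQ : symm Qm by move=> a b; rewrite /Qm sA sdl.
have sP' : symm P' by move=> a b; rewrite /P' sB sdl.
have sQ' : symm Q' by move=> a b; rewrite /Q' sB sdl.
have pP : psd P.
  move=> y; rewrite (qf_ext (N := fun a b => A a b + (- l) * dl a b)); last first.
    by move=> a b; rewrite /P mulNr.
  by rewrite qfDM qfZM mulNr subr_ge0.
have pQ : psd Qm.
  move=> y; rewrite (qf_ext (N := fun a b => D * dl a b + (- 1) * A a b)); last first.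
    by move=> a b; rewrite /Qm mulNr mul1r.
  by rewrite qfDM !qfZM mulNr mul1r subr_ge0.
have pP' : psd P'.
  move=> y; rewrite (qf_ext (N := fun a b => B a b + (- l') * dl a b)); last first.
    by move=> a b; rewrite /P' mulNr.
  by rewrite qfDM qfZM mulNr subr_ge0.
have pQ' : psd Q'.
  move=> y; rewrite (qf_ext (N := fun a b => D' * dl a b + (- 1) * B a b)); last first.
    by move=> a b; rewrite /Q' mulNr mul1r.
  by rewrite qfDM !qfZM mulNr mul1r subr_ge0.
have k1 := kron_psd sP pP sP' pP' z.
have k2 := kron_psd sP pP sQ' pQ' z.
have k3 := kron_psd sQ pQ sP' pP' z.
have k4 := kron_psd sQ pQ sQ' pQ' z.
set K1 := qf (fun a b : T * U => P a.1 b.1 * P' a.2 b.2) z in k1.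
set K2 := qf (fun a b : T * U => P a.1 b.1 * Q' a.2 b.2) z in k2.
set K3 := qf (fun a b : T * U => Qm a.1 b.1 * P' a.2 b.2) z in k3.
set K4 := qf (fun a b : T * U => Qm a.1 b.1 * Q' a.2 b.2) z in k4.
have E : (D * D' - mu) * K1 + (D * l' - mu) * K2 + (l * D' - mu) * K3
    + (l * l' - mu) * K4 =
    (D - l) * (D' - l') * qf (fun a b : T * U => A a.1 b.1 * B a.2 b.2) z
    + (- ((D - l) * (D' - l') * mu)) * qf dl z.
  rewrite /K1 /K2 /K3 /K4 -!qfZM -!qfDM; apply: qf_ext => a b.
  rewrite (dl_pair a b) /P /P' /Qm /Q'; ring.
have mu1 : mu <= D * l' by rewrite /mu ge_min lexx.
have mu2 : mu <= l * D' by rewrite /mu ge_min lexx orbT.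
have mu0 : mu < 0 by apply: le_lt_trans mu1 _; rewrite pmulr_rlt0.
have c1 : 0 <= D * D' - mu by rewrite subr_ge0 (le_trans (ltW mu0)) // mulr_ge0 // ltW.
have c2 : 0 <= D * l' - mu by rewrite subr_ge0.
have c3 : 0 <= l * D' - mu by rewrite subr_ge0.
have c4 : 0 <= l * l' - mu by rewrite subr_ge0 (le_trans (ltW mu0)) // nmulr_rge0 // ltW.
have : 0 <= (D - l) * (D' - l') * qf (fun a b : T * U => A a.1 b.1 * B a.2 b.2) z
    + (- ((D - l) * (D' - l') * mu)) * qf dl z.
  rewrite -E; apply: addr_ge0; [apply: addr_ge0; [apply: addr_ge0|]|];
    by apply: mulr_ge0.
have Dl : 0 < (D - l) * (D' - l').
  by apply: mulr_gt0; rewrite subr_gt0; [exact: lt_trans l0 D0|exact: lt_trans l'0 D'0].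
move=> h; rewrite -subr_ge0 -(pmulr_rge0 _ Dl).
set Q0 := qf _ z in h *; set N0 := qf dl z in h *.
have -> : (D - l) * (D' - l') * (Q0 - mu * N0) =
  (D - l) * (D' - l') * Q0 + - ((D - l) * (D' - l') * mu) * N0 by ring.
exact: h.
Qed.
End K.

Section G.
Variable R : realType.

Definition Ae {T : finType} (e : rel T) : T -> T -> R := fun u v => (e u v)%:R.

Lemma qf_dl {X : finType} (y : X -> R) : qf dl y = \sum_a y a ^+ 2.
Proof.
rewrite /qf /bf; apply: eq_bigr => a _.
rewrite (eq_bigr (fun b => (a == b)%:R * (y a * y b))); last first.
  by move=> b _; rewrite /dl mulrA.
by rewrite sum_dl expr2.
Qed.

Lemma sum_prod4 {T U : finType} (F : T -> T -> R) (G : U -> U -> R) :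
  \sum_(a : T * U) \sum_(b : T * U) F a.1 b.1 * G a.2 b.2 =
  (\sum_u \sum_u' F u u') * (\sum_v \sum_v' G v v').
Proof.
rewrite sum_pair.
under eq_bigr => u _ do under eq_bigr => v _ do rewrite sum_pair /=.
rewrite big_distrl /=; apply: eq_bigr => u _.
rewrite big_distrl /= exchange_big /=; apply: eq_bigr => u' _.
rewrite big_distrr /=; apply: eq_bigr => v _.
by rewrite big_distrr.
Qed.

Lemma prod_lb {T U : finType} (e : rel T) (f : rel U) D l D' l' (x : T -> R)
  (x' : U -> R) N N' k d (phi : T * U -> 'I_d -> R) :
  symmetric e -> symmetric f -> 0 < D -> l < 0 -> 0 < D' -> l' < 0 ->
  (forall y, l * qf dl y <= qf (Ae e) y) -> (forall y, qf (Ae e) y <= D * qf dl y) ->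
  (forall y, l' * qf dl y <= qf (Ae f) y) -> (forall y, qf (Ae f) y <= D' * qf dl y) ->
  (forall a b, e a b -> x a = 1) -> (forall a b, f a b -> x' a = 1) ->
  \sum_a x a ^+ 2 = N -> \sum_a x' a ^+ 2 = N' -> 0 < N -> 0 < N' ->
  \sum_a \sum_b Ae e a b = D * N -> \sum_a \sum_b Ae f a b = D' * N' ->
  1 < k -> vector_coloring (cat_prod e f) k phi ->
  Num.min (D * l') (l * D') <= - (k - 1)^-1 * (D * D').
Proof.
move=> se sf D0 l0 D'0 l'0 Al Au Bl Bu xe xf xN xN' N0 N'0 sumA sumB k1 [phi1 phiE].
set mu := Num.min _ _.
set t := - (k - 1)^-1.
pose w (a : T * U) := x a.1 * x' a.2.
pose z (i : 'I_d) (a : T * U) := w a * phi a i.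
have symA : symm (Ae e) by move=> a b; rewrite /Ae se.
have symB : symm (Ae f) by move=> a b; rewrite /Ae sf.
have lb := prod_form_lb symA symB D0 l0 D'0 l'0 Al Au Bl Bu.
have Apr : forall i, qf (Ae (cat_prod e f)) (z i) =
    qf (fun a b : T * U => Ae e a.1 b.1 * Ae f a.2 b.2) (z i).
  move=> i; apply: qf_ext => a b; rewrite /Ae /cat_prod.
  by case: (e a.1 b.1); case: (f a.2 b.2); rewrite /= ?mul1r ?mul0r.
have S1 : \sum_i qf dl (z i) = N * N'.
  under eq_bigr do rewrite qf_dl.
  rewrite exchange_big /=.
  transitivity (\sum_(a : T * U) w a ^+ 2).
    apply: eq_bigr => a _; have := phi1 a; rewrite /dotv => h.
    rewrite (eq_bigr (fun i => w a ^+ 2 * (phi a i * phi a i))).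
      by rewrite -big_distrr /= h mulr1.
    by move=> i _; rewrite /z; ring.
  rewrite sum_pair -xN -xN' big_distrl /=; apply: eq_bigr => u _.
  rewrite big_distrr /=; apply: eq_bigr => v _; rewrite /w /=; ring.
have S2 : \sum_i qf (Ae (cat_prod e f)) (z i) <= t * (D * N * (D' * N')).
  rewrite /qf /bf exchange_big /=.
  apply: (@le_trans _ _ (\sum_(a : T * U) \sum_(b : T * U)
     t * (Ae e a.1 b.1 * Ae f a.2 b.2))).
    apply: ler_sum => a _; rewrite exchange_big /=; apply: ler_sum => b _.
    rewrite (eq_bigr (fun i => (Ae (cat_prod e f) a b * w a * w b) *
       (phi a i * phi b i))); last by move=> i _; rewrite /z; ring.
    rewrite -big_distrr /= -/(dotv (phi a) (phi b)).
    rewrite /Ae /cat_prod; case eab: (e a.1 b.1); case fab: (f a.2 b.2) => /=;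
      rewrite ?mul0r ?mulr0 ?mul1r //.
    have wa : w a = 1 by rewrite /w (xe _ _ eab) (xf _ _ fab) mul1r.
    have wb : w b = 1.
      have eba : e b.1 a.1 by rewrite se.
      have fba : f b.2 a.2 by rewrite sf.
      by rewrite /w (xe _ _ eba) (xf _ _ fba) mul1r.
    rewrite wa wb !mul1r ?mulr1 /t; apply: phiE; by rewrite /cat_prod eab fab.
  rewrite -sumA -sumB -sum_prod4 big_distrr /= le_eqVlt; apply/orP; left.
  by apply/eqP; apply: eq_bigr => a _; rewrite big_distrr.
have S3 : mu * (N * N') <= \sum_i qf (Ae (cat_prod e f)) (z i).
  rewrite -S1 big_distrr /=; apply: ler_sum => i _; rewrite Apr; exact: lb.
have := le_trans S3 S2.
have -> : t * (D * N * (D' * N')) = (t * (D * D')) * (N * N') by ring.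
by rewrite ler_pM2r // mulr_gt0.
Qed.
End G.

Section Aut.
Variable T : finType.
Variable e : rel T.

Definition autb (s : {ffun T -> T}) : bool :=
  injectiveb s && [forall u, [forall v, e (s u) (s v) == e u v]].

Lemma autbP s : autb s -> injective s /\ forall u v, e (s u) (s v) = e u v.
Proof.
case/andP => /injectiveP si /forallP h; split => // u v.
by have /forallP/(_ v)/eqP := h u.
Qed.

Lemma autbI (s : {ffun T -> T}) : injective s -> (forall u v, e (s u) (s v) = e u v) ->
  autb s.
Proof.
move=> si h; apply/andP; split; first exact/injectiveP.
by apply/forallP => u; apply/forallP => v; rewrite h.
Qed.

Lemma aut_of (s : T -> T) : is_automorphism e s -> autb [ffun x => s x].
Proof.
case=> sb h; apply: autbI => [u v|u v]; rewrite !ffunE //.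
exact: (bij_inj sb).
Qed.

Lemma aut_id : autb [ffun x => x].
Proof. by apply: autbI => [u v|u v]; rewrite !ffunE. Qed.

Lemma aut_comp s t : autb s -> autb t -> autb [ffun x => s (t x)].
Proof.
move=> /autbP [si sh] /autbP [ti th]; apply: autbI => [u v|u v]; rewrite !ffunE.
  by move/si/ti.
by rewrite sh th.
Qed.

Lemma aut_inv s : autb s -> exists s', [/\ autb s', cancel s s' & cancel s' s].
Proof.
move=> /autbP [si sh]; have [g sg gs] := injF_bij si.
exists [ffun x => g x]; split => [|x|x]; rewrite ?ffunE //.
apply: autbI => [u v|u v]; rewrite !ffunE.
  by move/(congr1 s); rewrite !gs.
by rewrite -sh !gs.
Qed.

Lemma aut_ni s u : autb s -> [exists v, e (s u) v] = [exists v, e u v].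
Proof.
move=> sa; have [si sh] := autbP sa; have [s' [_ ss' s's]] := aut_inv sa.
apply/existsP/existsP => -[v hv].
  by exists (s' v); rewrite -sh s's.
by exists (s v); rewrite sh.
Qed.

Lemma reindex_aut (R : realType) t (F : {ffun T -> T} -> R) : autb t ->
  \sum_(s | autb s) F [ffun x => s (t x)] = \sum_(s | autb s) F s.
Proof.
move=> ta; have [t' [t'a tt' t't]] := aut_inv ta.
pose h (s : {ffun T -> T}) := [ffun x => s (t x)].
pose h' (s : {ffun T -> T}) := [ffun x => s (t' x)].
have hh' : cancel h h' by move=> s; apply/ffunP => x; rewrite !ffunE t't.
have h'h : cancel h' h by move=> s; apply/ffunP => x; rewrite !ffunE tt'.
rewrite [RHS](reindex h); last by exists h' => s _.
apply: eq_bigl => s; apply/idP/idP => sa; first by rewrite /h; exact: aut_comp.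
by rewrite -[s]hh' /h'; apply: aut_comp.
Qed.


Definition bip := exists c : T -> bool, forall u v, e u v -> c u != c v.

Lemma orbit_edge u0 v0 : edge_transitive e -> e u0 v0 -> forall a b, e a b ->
  (exists s, autb s /\ s u0 = a) \/ (exists s, autb s /\ s u0 = b).
Proof.
move=> et e0 a b eab; have [s [sa [[h1 _]|[h1 _]]]] := et _ _ _ _ e0 eab.
  by left; exists [ffun x => s x]; rewrite ffunE; split => //; exact: aut_of.
by right; exists [ffun x => s x]; rewrite ffunE; split => //; exact: aut_of.
Qed.

Lemma vt u0 v0 : edge_transitive e -> ~ bip -> e u0 v0 ->
  forall w, [exists v, e w v] -> exists s, autb s /\ s u0 = w.
Proof.
move=> et nb e0 w /existsP [w' ew].
apply: contrapT => nO; apply: nb.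
pose O a := exists s, autb s /\ s u0 = a.
pose O' a := exists s, autb s /\ s w = a.
have E1 := orbit_edge et e0.
have E2 := orbit_edge et ew.
have dj : forall a, O a -> O' a -> False.
  move=> a [s [sa sa0]] [t [ta tw]]; apply: nO.
  have [t' [t'a tt' t't]] := aut_inv ta.
  exists [ffun x => t' (s x)]; split; first exact: aut_comp.
  by rewrite ffunE sa0 -tw tt'.
exists (fun a => `[< O a >]) => a b eab.
have [Oa|Oa] := E1 _ _ eab; have [O'a|O'a] := E2 _ _ eab.
- by case: (dj _ Oa O'a).
- by rewrite (asboolT Oa) (asboolF (fun Ob => dj _ Ob O'a)).
- by rewrite (asboolT Oa) (asboolF (fun Ob => dj _ Ob O'a)).
- by case: (dj _ Oa O'a).
Qed.

End Aut.

Section U.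
Variable R : realType.
Variable T : finType.
Variable e : rel T.

Definition ni (u : T) : bool := [exists v, e u v].
Definition deg (u : T) : R := \sum_v Ae R e u v.

Lemma sum_ind {I : finType} (P : pred I) (F : I -> R) :
  \sum_s (P s)%:R * F s = \sum_(s | P s) F s.
Proof. by rewrite [RHS]big_mkcond; apply: eq_bigr => s _; case: (P s); rewrite /= ?mul1r ?mul0r. Qed.

Lemma sum_aut_inj (s : T -> T) (G : T -> R) : injective s ->
  \sum_a G (s a) = \sum_a G a.
Proof. by move=> si; rewrite [RHS](reindex_inj si). Qed.

Lemma deg_aut s u : autb e s -> deg (s u) = deg u.
Proof.
move=> /autbP [si sh]; rewrite /deg -(sum_aut_inj (fun v => Ae R e (s u) v) si).
by apply: eq_bigr => v _; rewrite /Ae sh.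
Qed.

Lemma deg_ni0 u : ~~ ni u -> deg u = 0.
Proof.
move=> /existsPn h; rewrite /deg big1 // => v _; by rewrite /Ae (negbTE (h v)).
Qed.

Lemma deg_ge0 u : 0 <= deg u.
Proof. by apply: sumr_ge0 => v _; rewrite /Ae ler0n. Qed.


Lemma sum2_aut_inj (s : T -> T) (H : T -> T -> R) : injective s ->
  \sum_a \sum_b H (s a) (s b) = \sum_a \sum_b H a b.
Proof.
move=> si; transitivity (\sum_a \sum_b H (s a) b).
  by apply: eq_bigr => a _; exact: (sum_aut_inj (H (s a)) si).
exact: (sum_aut_inj (fun a => \sum_b H a b) si).
Qed.

Lemma sum_enum {I : finType} (G : I -> R) :
  \sum_(i < #|I|) G (enum_val i) = \sum_s G s.
Proof. by rewrite -big_enum_val. Qed.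

Lemma ub_col u0 v0 (z : T -> R) : symmetric e -> edge_transitive e -> ~ bip e ->
  e u0 v0 -> (forall a, ~~ ni a -> z a = 0) -> qf (Ae R e) z < 0 ->
  exists d (phi : T -> 'I_d -> R),
    vector_coloring e (1 - deg u0 * qf dl z / qf (Ae R e) z) phi.
Proof.
move=> se et nb e0 zni q0.
set q := qf (Ae R e) z in q0 *; set n := qf dl z; set D := deg u0.
pose X a b := \sum_(s | autb e s) z (s a) * z (s b).
have XA : forall t a b, autb e t -> X (t a) (t b) = X a b.
  move=> t a b ta; rewrite /X -(reindex_aut (fun s => z (s a) * z (s b)) ta).
  by apply: eq_bigr => s _; rewrite !ffunE.
have Xs : forall a b, X a b = X b a.
  by move=> a b; apply: eq_bigr => s _; rewrite mulrC.
have XE : forall a b, e a b -> X a b = X u0 v0.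
  move=> a b eab; have [s [sa [[h1 h2]|[h1 h2]]]] := et _ _ _ _ e0 eab.
    by have := XA [ffun x => s x] u0 v0 (aut_of sa); rewrite !ffunE h1 h2.
  by have := XA [ffun x => s x] u0 v0 (aut_of sa); rewrite !ffunE h1 h2 Xs.
have Xr : forall w, ni w -> X w w = X u0 u0.
  by move=> w /(vt et nb e0) [s [sa <-]]; rewrite XA.
have Xn : forall w, ~~ ni w -> X w w = 0.
  move=> w nw; rewrite /X big1 // => s sa; rewrite zni ?mul0r //.
  by rewrite /ni aut_ni.
pose na := \sum_(s | autb e s) (1 : R).
have na0 : 0 < na.
  rewrite /na (bigD1 [ffun x => x]) ?aut_id //=.
  by apply: (lt_le_trans ltr01); rewrite lerDl sumr_ge0.
have F5 : \sum_a \sum_b Ae R e a b * X a b = na * q.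
  rewrite /X.
  under eq_bigr => a _ do under eq_bigr => b _ do rewrite big_distrr.
  under eq_bigr => a _ do rewrite exchange_big.
  rewrite exchange_big /na big_distrl /=; apply: eq_bigr => s sa.
  have [si sh] := autbP sa.
  rewrite mul1r /q /qf /bf -(sum2_aut_inj (fun a b => Ae R e a b * z a * z b) si).
  by apply: eq_bigr => a _; apply: eq_bigr => b _; rewrite /Ae sh mulrA.
have F6 : \sum_a X a a = na * n.
  rewrite /X exchange_big /na big_distrl /=; apply: eq_bigr => s sa.
  have [si sh] := autbP sa.
  rewrite mul1r /n qf_dl -(sum_aut_inj (fun a => z a ^+ 2) si).
  by apply: eq_bigr => a _; rewrite expr2.
pose N := \sum_a (ni a)%:R : R.
have degE : forall a, deg a = (ni a)%:R * D.
  move=> a; case nia : (ni a); last by rewrite deg_ni0 ?nia ?mul0r.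
  by have [s [sa <-]] := vt et nb e0 nia; rewrite deg_aut // mul1r.
have F7 : \sum_a \sum_b Ae R e a b * X a b = X u0 v0 * (D * N).
  transitivity (\sum_a \sum_b Ae R e a b * X u0 v0).
    apply: eq_bigr => a _; apply: eq_bigr => b _.
    by rewrite /Ae; case eab : (e a b); rewrite ?mul0r // XE.
  rewrite /N big_distrr big_distrr /=; apply: eq_bigr => a _.
  rewrite -big_distrl /= -/(deg a) degE; ring.
have F8 : \sum_a X a a = N * X u0 u0.
  rewrite /N big_distrl /=; apply: eq_bigr => a _.
  case nia : (ni a); first by rewrite Xr ?nia // mul1r.
  by rewrite Xn ?nia // mul0r.
have N0 : 0 < N.
  rewrite /N (bigD1 u0) //=; have -> : ni u0 by apply/existsP; exists v0.
  by apply: (lt_le_trans ltr01); rewrite lerDl sumr_ge0 // => a _; rewrite ler0n.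
have D0 : 0 < D.
  rewrite /D /deg (bigD1 v0) //= {1}/Ae e0.
  by apply: (lt_le_trans ltr01); rewrite lerDl sumr_ge0 // => a _; rewrite /Ae ler0n.
have n0 : 0 < n.
  have nge : 0 <= n by rewrite /n qf_dl sumr_ge0 // => a _; rewrite sqr_ge0.
  rewrite lt_def nge andbT; apply/negP => /eqP n00.
  have zz : forall a, z a = 0.
    move=> a; move: n00; rewrite /n qf_dl => /psumr_eq0P h.
    by apply/eqP; rewrite -sqrf_eq0; apply/eqP; apply: h => // b _; rewrite sqr_ge0.
  move: q0; rewrite /q /qf /bf big1 ?ltxx // => a _; rewrite big1 // => b _.
  by rewrite !zz !mulr0.
set c := X u0 v0 in F7 XE; set r0 := X u0 u0 in F8 Xr.
have E1 : c * (D * N) = na * q by rewrite -F5 F7.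
have E2 : N * r0 = na * n by rewrite -F6 F8.
have r00 : 0 < r0.
  have : 0 < N * r0 by rewrite E2 mulr_gt0.
  by rewrite pmulr_rgt0.
have key : c * (D * n) = q * r0.
  apply: (mulIf (lt0r_neq0 N0)).
  have -> : c * (D * n) * N = c * (D * N) * n by ring.
  have -> : q * r0 * N = (N * r0) * q by ring.
  by rewrite E1 E2; ring.
pose sq := Num.sqrt r0.
have sq2 : sq * sq = r0 by rewrite -expr2 sqr_sqrtr // ltW.
have sq0 : sq != 0 by rewrite /sq sqrtr_eq0 -ltNge.
pose phi a (i : 'I_#|{ffun T -> T}|) : R := if ni a then
  (autb e (enum_val i))%:R * z (enum_val i a) / sq
  else ((enum_val i) == [ffun x => x])%:R.
have dotE : forall a b, ni a -> ni b -> dotv (phi a) (phi b) = X a b / r0.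
  move=> a b nia nib; rewrite /dotv /phi nia nib.
  rewrite (sum_enum (fun s => (autb e s)%:R * z (s a) / sq * ((autb e s)%:R * z (s b) / sq))).
  rewrite (eq_bigr (fun s => (autb e s)%:R * (z (s a) * z (s b) / r0))); last first.
    move=> s _; rewrite -sq2; case: (autb e s); rewrite /= ?mul0r //.
    by field.
  by rewrite sum_ind /X big_distrl.
exists #|{ffun T -> T}|, phi; split.
  move=> a; case nia : (ni a); first by rewrite dotE // Xr // divff // lt0r_neq0.
  rewrite /dotv /phi nia.
  rewrite (sum_enum (fun s => (s == [ffun x => x])%:R * (s == [ffun x => x])%:R)).
  rewrite (eq_bigr (fun s => ([ffun x => x] == s)%:R * (s == [ffun x => x])%:R)).
    by rewrite sum_dl eqxx.
  by move=> s _; rewrite eq_sym.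
move=> a b eab.
have nia : ni a by apply/existsP; exists b.
have nib : ni b by apply/existsP; exists a; rewrite se.
rewrite dotE // XE //.
have -> : - (1 - D * n / q - 1)^-1 = q / (D * n).
  field; rewrite (lt0r_neq0 n0) (lt0r_neq0 D0) (ltr0_neq0 q0) /=.
  have -> : q - D * n + -1 * q = - (D * n) by ring.
  by rewrite oppr_eq0 mulf_neq0 // lt0r_neq0.
rewrite le_eqVlt; apply/orP; left; apply/eqP.
apply: (mulIf (lt0r_neq0 r00)); rewrite mulfVK ?lt0r_neq0 //.
apply: (mulIf (lt0r_neq0 (mulr_gt0 D0 n0))); rewrite key.
by field; rewrite (lt0r_neq0 n0) (lt0r_neq0 D0).
Qed.
End U.

Section M.
Variable R : realType.

Definition Sk {T : finType} (e : rel T) : set R :=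
  [set k : R | 1 < k /\ exists d (phi : T -> 'I_d -> R), vector_coloring e k phi].

Lemma dot_ge_m1 d (x y : 'I_d -> R) : dotv x x = 1 -> dotv y y = 1 -> -1 <= dotv x y.
Proof.
move=> hx hy.
have : 0 <= \sum_i (x i + y i) ^+ 2 by apply: sumr_ge0 => i _; rewrite sqr_ge0.
have -> : \sum_i (x i + y i) ^+ 2 = dotv x x + 2 * dotv x y + dotv y y.
  rewrite /dotv big_distrr -!big_split /=; apply: eq_bigr => i _; ring.
rewrite hx hy => h; lra.
Qed.

Lemma Sk_ge2 {T : finType} (e : rel T) k : has_edge e -> Sk e k -> 2 <= k.
Proof.
move=> [u [v euv]] [k1 [d [phi [p1 pe]]]].
have := le_trans (dot_ge_m1 (p1 u) (p1 v)) (pe _ _ euv).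
rewrite lerN2 invf_le1 ?subr_gt0 // => h; lra.
Qed.

Lemma Sk_up {T : finType} (e : rel T) k k' : Sk e k -> k <= k' -> Sk e k'.
Proof.
move=> [k1 [d [phi [p1 pe]]]] kk'; split; first exact: lt_le_trans kk'.
exists d, phi; split => // u v euv; apply: le_trans (pe _ _ euv) _.
rewrite lerN2 lef_pV2 ?posrE ?subr_gt0 //; last exact: lt_le_trans kk'.
by rewrite lerD2r.
Qed.

Lemma Sk_prodl {T U : finType} (e : rel T) (f : rel U) k :
  Sk e k -> Sk (cat_prod e f) k.
Proof.
move=> [k1 [d [phi [p1 pe]]]]; split => //; exists d, (fun a => phi a.1); split.
  by move=> a; exact: p1.
by move=> a b /andP [h _]; exact: pe.
Qed.

Lemma Sk_prodr {T U : finType} (e : rel T) (f : rel U) k :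
  Sk f k -> Sk (cat_prod e f) k.
Proof.
move=> [k1 [d [phi [p1 pe]]]]; split => //; exists d, (fun a => phi a.2); split.
  by move=> a; exact: p1.
by move=> a b /andP [_ h]; exact: pe.
Qed.

Lemma Sk_bip {T : finType} (e : rel T) : bip e -> Sk e 2.
Proof.
move=> [c hc]; split; first by rewrite ltr1n.
exists 1%N, (fun u (i : 'I_1) => if c u then 1 else -1); split.
  by move=> u; rewrite /dotv big_ord1; case: (c u); rewrite ?mulr1 ?mulrNN ?mulr1.
move=> u v euv; rewrite /dotv big_ord1.
have := hc _ _ euv; case: (c u); case: (c v) => //= _.
  rewrite mulrN1 -[2]/(1 + 1) addrK invr1 //.
rewrite mulr1 -[2]/(1 + 1) addrK invr1 //.
Qed.

Lemma chi_edge {T : finType} (e : rel T) : has_edge e -> chi_vec R e = inf (Sk e).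
Proof. by move=> he; rewrite /chi_vec asboolT. Qed.

Lemma chi_noedge {T : finType} (e : rel T) : ~ has_edge e -> chi_vec R e = 1.
Proof. by move=> he; rewrite /chi_vec asboolF. Qed.

Lemma chi_le {T : finType} (e : rel T) k : has_edge e -> Sk e k -> chi_vec R e <= k.
Proof.
move=> he Sek; rewrite chi_edge //; apply: (ge_inf _ Sek).
by exists 1 => y [y1 _]; exact: ltW.
Qed.

Lemma chi_ge {T : finType} (e : rel T) m : has_edge e -> (exists k, Sk e k) ->
  (forall k, Sk e k -> m <= k) -> m <= chi_vec R e.
Proof. by move=> he [k Sek] h; rewrite chi_edge //; apply: lb_le_inf => //; exists k. Qed.

End M.

Section N.
Variable R : realType.
Variable T : finType.
Variable e : rel T.
Variables u0 v0 : T.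
Hypothesis se : symmetric e.
Hypothesis ie : irreflexive e.
Hypothesis et : edge_transitive e.
Hypothesis nb : ~ bip e.
Hypothesis e0 : e u0 v0.

Let D := deg R e u0.

Lemma degE a : deg R e a = (ni e a)%:R * D.
Proof.
case nia : (ni e a); last by rewrite deg_ni0 ?nia ?mul0r.
by have [s [sa <-]] := vt et nb e0 nia; rewrite deg_aut // mul1r.
Qed.

Lemma D_gt0 : 0 < D.
Proof.
rewrite /D /deg (bigD1 v0) //= {1}/Ae e0.
by apply: (lt_le_trans ltr01); rewrite lerDl sumr_ge0 // => a _; rewrite /Ae ler0n.
Qed.

Lemma qf_upper y : qf (Ae R e) y <= D * qf dl y.
Proof.
rewrite qf_dl /qf /bf.
have h1 : forall a b, Ae R e a b * y a * y b <=
    (Ae R e a b * y a ^+ 2 + Ae R e a b * y b ^+ 2) / 2.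
  move=> a b; have A0 : 0 <= Ae R e a b by rewrite /Ae ler0n.
  have := sqr_ge0 (y a - y b); set p := y a; set q := y b; set A := Ae R e a b.
  move=> h; have : 0 <= A * (p - q) ^+ 2 by apply: mulr_ge0.
  move=> h2; rewrite ler_pdivlMr //; nra.
apply: (@le_trans _ _ (\sum_a \sum_b (Ae R e a b * y a ^+ 2 + Ae R e a b * y b ^+ 2) / 2)).
  by apply: ler_sum => a _; apply: ler_sum => b _; exact: h1.
have -> : \sum_a \sum_b (Ae R e a b * y a ^+ 2 + Ae R e a b * y b ^+ 2) / 2 =
    \sum_a deg R e a * y a ^+ 2.
  transitivity ((\sum_a \sum_b Ae R e a b * y a ^+ 2 +
                 \sum_a \sum_b Ae R e a b * y b ^+ 2) / 2).
    rewrite -big_split big_distrl /=; apply: eq_bigr => a _.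
    by rewrite -big_split big_distrl.
  rewrite [X in _ + X]exchange_big /=.
  have -> : \sum_j \sum_i Ae R e i j * y j ^+ 2 = \sum_a \sum_b Ae R e a b * y a ^+ 2.
    by apply: eq_bigr => a _; apply: eq_bigr => b _; rewrite /Ae se.
  transitivity (\sum_a \sum_b Ae R e a b * y a ^+ 2); first by field.
  apply: eq_bigr => a _.
  by rewrite /deg big_distrl.
rewrite big_distrr /=; apply: ler_sum => a _; rewrite degE.
apply: ler_wpM2r; first exact: sqr_ge0.
case: (ni e a); rewrite ?mul1r ?mul0r //; exact: ltW D_gt0.
Qed.

Lemma sumA : \sum_a \sum_b Ae R e a b = D * \sum_a (ni e a)%:R ^+ 2.
Proof.
rewrite big_distrr /=; apply: eq_bigr => a _; rewrite -/(deg R e a) degE.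
by case: (ni e a); rewrite /= ?expr1n ?expr0n /= ?mulr1 ?mulr0 ?mul1r ?mul0r.
Qed.

Lemma Sk_ub z : qf (Ae R e) z < 0 -> Sk e (1 - D * qf dl z / qf (Ae R e) z).
Proof.
move=> q0.
pose z' a := (ni e a)%:R * z a.
have Q' : qf (Ae R e) z' = qf (Ae R e) z.
  rewrite /qf /bf; apply: eq_bigr => a _; apply: eq_bigr => b _.
  rewrite /z' /Ae; case eab : (e a b); rewrite ?mul0r //.
  have -> : ni e a by apply/existsP; exists b.
  have -> : ni e b by apply/existsP; exists a; rewrite se.
  by rewrite !mul1r.
have N' : qf dl z' <= qf dl z.
  rewrite !qf_dl; apply: ler_sum => a _; rewrite /z'.
  by case: (ni e a); rewrite ?mul1r ?mul0r ?expr0n /= ?sqr_ge0.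
have zni : forall a, ~~ ni e a -> z' a = 0 by move=> a /negbTE h; rewrite /z' h mul0r.
have q0' : qf (Ae R e) z' < 0 by rewrite Q'.
have [d [phi col]] := ub_col se et nb e0 zni q0'.
rewrite Q' in col.
have n0 : 0 < qf dl z'.
  have nge : 0 <= qf dl z' by rewrite qf_dl sumr_ge0 // => a _; rewrite sqr_ge0.
  rewrite lt_def nge andbT; apply/negP => /eqP n00.
  have zz : forall a, z' a = 0.
    move=> a; move: n00; rewrite qf_dl => /psumr_eq0P h.
    by apply/eqP; rewrite -sqrf_eq0; apply/eqP; apply: h => // b _; rewrite sqr_ge0.
  move: q0'; rewrite /qf /bf big1 ?ltxx // => a _; rewrite big1 // => b _.
  by rewrite !zz !mulr0.
have Dn : 0 < D * qf dl z' by rewrite mulr_gt0 ?D_gt0.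
apply: (@Sk_up _ _ _ (1 - D * qf dl z' / qf (Ae R e) z)).
  split; last by exists d, phi.
  rewrite ltrDl; have : 0 < D * qf dl z' / (- qf (Ae R e) z).
    by rewrite divr_gt0 // oppr_gt0 -Q'.
  by rewrite invrN mulrN.
rewrite lerD2l lerN2; apply: ler_wnM2r; first by rewrite invr_le0 ltW.
by apply: ler_wpM2l => //; exact: ltW D_gt0.
Qed.

Lemma he : has_edge e.
Proof. by exists u0, v0. Qed.

Lemma Sk_exists : exists k : R, Sk e k.
Proof.
pose z := fun c => dl u0 c + (-1) * dl v0 c : R.
have sA : symm (Ae R e) by move=> a b; rewrite /Ae se.
have q0 : qf (Ae R e) z < 0.
  rewrite /z qfD // /qf !bf_dl2 /Ae e0 !ie /=; lra.
by eexists; exact: Sk_ub q0.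
Qed.

Lemma chi_ge2 : 2 <= chi_vec R e.
Proof. by apply: chi_ge he Sk_exists _ => k; apply: Sk_ge2 he. Qed.

Lemma qf_lower y : D / (1 - chi_vec R e) * qf dl y <= qf (Ae R e) y.
Proof.
have c2 := chi_ge2; set c := chi_vec R e in c2 *.
have n0 : 0 <= qf dl y by rewrite qf_dl sumr_ge0 // => a _; rewrite sqr_ge0.
have l0 : D / (1 - c) <= 0.
  by rewrite mulr_ge0_le0 ?invr_le0 ?(ltW D_gt0) // subr_le0 (le_trans _ c2) // ler1n.
have [q0|q0] := leP 0 (qf (Ae R e) y).
  by apply: le_trans q0; rewrite mulr_le0_ge0.
have h := chi_le he (Sk_ub q0); rewrite -/c in h.
set q := qf (Ae R e) y in q0 h *; set n := qf dl y in n0 h *.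
have h2 : c - 1 <= D * n / (- q).
  by rewrite invrN mulrN; lra.
rewrite ler_pdivlMr ?oppr_gt0 // in h2.
have -> : D / (1 - c) * n = (- (D * n)) / (c - 1).
  have c1 : 1 < c by apply: lt_le_trans c2; rewrite ltr1n.
  have cn1 : c - 1 != 0 by rewrite lt0r_neq0 // subr_gt0.
  have cn2 : 1 - c != 0 by rewrite ltr0_neq0 // subr_lt0.
  by field; rewrite cn1 cn2.
rewrite ler_pdivrMr ?subr_gt0 ?(lt_le_trans _ c2) ?ltr1n //.
nra.
Qed.

End N.

Lemma alg_step (R : realType) (X Y c k : R) : 0 < X -> 0 < Y -> 1 < c -> 1 < k ->
  X * (Y / (1 - c)) <= - (k - 1)^-1 * (X * Y) -> c <= k.
Proof.
move=> X0 Y0 c1 k1 h.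
have XY : 0 < X * Y by rewrite mulr_gt0.
have : (X * Y) * (1 - c)^-1 <= (X * Y) * (- (k - 1)^-1).
  have e1 : X * (Y / (1 - c)) = (X * Y) * (1 - c)^-1 by rewrite mulrA.
  have e2 : - (k - 1)^-1 * (X * Y) = (X * Y) * (- (k - 1)^-1) by rewrite mulrC.
  by rewrite -e1 -e2.
rewrite ler_pM2l // -opprB invrN lerN2 lef_pV2 ?posrE ?subr_gt0 //.
by rewrite lerD2r.
Qed.

Lemma chi_props (R : realType) (T : finType) (e : rel T) : simple_graph e ->
  edge_transitive e -> has_edge e ->
  (exists k : R, Sk e k) /\ 2 <= chi_vec R e.
Proof.
move=> [se ie] et he.
have [b|nb] := pselect (bip e).
  have S2 : Sk e (2 : R) by exact: Sk_bip.
  split; first by exists 2.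
  apply: (chi_ge he); first by exists 2.
  by move=> k; exact: Sk_ge2 he.
have [u0 [v0 e0]] := he.
by split; [exact: (Sk_exists R se ie et nb e0) | exact: (chi_ge2 R se ie et nb e0)].
Qed.

Unset Implicit Arguments.

Theorem corollary5p6 (R : realType) (T U : finType) (e : rel T) (f : rel U) :
  simple_graph e -> simple_graph f ->
  edge_transitive e -> edge_transitive f ->
  chi_vec R (cat_prod e f) = Num.min (chi_vec R e) (chi_vec R f).
Proof.
move=> sge sgf ete etf.
have chi1 : forall (V : finType) (g : rel V), simple_graph g -> edge_transitive g ->
    1 <= chi_vec R g.
  move=> V g sg eg; have [hg|hg] := pselect (has_edge g).
    by have [_ h] := chi_props R sg eg hg; apply: le_trans h; rewrite ler1n.
  by rewrite chi_noedge.
have [he|he] := pselect (has_edge e); last first.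
  have hp0 : ~ has_edge (cat_prod e f).
    by move=> [a [b]]; rewrite /cat_prod => /andP [h _]; apply: he; exists a.1, b.1.
  by rewrite (chi_noedge R hp0) (chi_noedge R he) min_l // chi1.
have [hf|hf] := pselect (has_edge f); last first.
  have hp0 : ~ has_edge (cat_prod e f).
    by move=> [a [b]]; rewrite /cat_prod => /andP [_ h]; apply: hf; exists a.2, b.2.
  by rewrite (chi_noedge R hp0) (chi_noedge R hf) min_r // chi1.
have [[k0 Sk0] ce2] := chi_props R sge ete he.
have [[k1 Sk1] cf2] := chi_props R sgf etf hf.
have hp : has_edge (cat_prod e f).
  have [u0 [v0 e0]] := he; have [u1 [v1 e1]] := hf.
  by exists (u0, u1), (v0, v1); rewrite /cat_prod /= e0 e1.
apply/eqP; rewrite eq_le; apply/andP; split.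
  rewrite le_min; apply/andP; split.
    rewrite [X in _ <= X]chi_edge //; apply: lb_le_inf; first by exists k0.
    by move=> k Sek; apply: chi_le hp (Sk_prodl f Sek).
  rewrite [X in _ <= X]chi_edge //; apply: lb_le_inf; first by exists k1.
  by move=> k Sfk; apply: chi_le hp (Sk_prodr e Sfk).
apply: (chi_ge hp); first by exists k0; exact: Sk_prodl.
move=> k Spk; have k2 := Sk_ge2 hp Spk.
have [be|nbe] := pselect (bip e).
  rewrite ge_min; apply/orP; left; apply: le_trans _ k2.
  exact: chi_le he (Sk_bip R be).
have [bf|nbf] := pselect (bip f).
  rewrite ge_min; apply/orP; right; apply: le_trans _ k2.
  exact: chi_le hf (Sk_bip R bf).
have [u0 [v0 e0]] := he; have [u1 [v1 e1]] := hf.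
have [se ie] := sge; have [sf iff] := sgf.
set ce := chi_vec R e in ce2 *; set cf := chi_vec R f in cf2 *.
have ce1 : 1 < ce by apply: lt_le_trans ce2; rewrite ltr1n.
have cf1 : 1 < cf by apply: lt_le_trans cf2; rewrite ltr1n.
have D0 := D_gt0 R e0; have D'0 := D_gt0 R e1.
have l0 : deg R e u0 / (1 - ce) < 0.
  by rewrite pmulr_rlt0 // invr_lt0 subr_lt0.
have l'0 : deg R f u1 / (1 - cf) < 0.
  by rewrite pmulr_rlt0 // invr_lt0 subr_lt0.
have xe : forall a b, e a b -> (ni e a)%:R = 1 :> R.
  by move=> a b eab; have -> : ni e a by apply/existsP; exists b.
have xf : forall a b, f a b -> (ni f a)%:R = 1 :> R.
  by move=> a b eab; have -> : ni f a by apply/existsP; exists b.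
have N0 : 0 < \sum_a (ni e a)%:R ^+ 2 :> R.
  rewrite (bigD1 u0) //=; have -> : ni e u0 by apply/existsP; exists v0.
  by apply: (lt_le_trans ltr01); rewrite /= expr1n lerDl sumr_ge0 // => a _; rewrite sqr_ge0.
have N'0 : 0 < \sum_a (ni f a)%:R ^+ 2 :> R.
  rewrite (bigD1 u1) //=; have -> : ni f u1 by apply/existsP; exists v1.
  by apply: (lt_le_trans ltr01); rewrite /= expr1n lerDl sumr_ge0 // => a _; rewrite sqr_ge0.
case: Spk => kg1 [d [phi col]].
have h := prod_lb se sf D0 l0 D'0 l'0 (qf_lower se ie ete nbe e0)
  (qf_upper se ete nbe e0) (qf_lower sf iff etf nbf e1) (qf_upper sf etf nbf e1)
  xe xf erefl erefl N0 N'0 (sumA R ete nbe e0) (sumA R etf nbf e1) kg1 col.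
rewrite ge_min in h; case/orP: h => h.
  rewrite ge_min; apply/orP; right; exact: (alg_step D0 D'0 cf1 kg1 h).
rewrite ge_min; apply/orP; left.
rewrite [X in X <= _]mulrC [deg R e u0 * deg R f u1]mulrC in h; exact: (alg_step D'0 D0 ce1 kg1 h).
Qed.
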